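(* Let $S$ be a monoid. Any two trivial left $S$-acts, each of cardinality greater than one, are geometrically equivalent (in the variety of all left $S$-acts).
   Context: A left $S$-act is a nonempty set with an action $S\times A\to A$ satisfying $1a=a$, $(st)a=s(ta)$; homomorphisms preserve the action. An $S$-act $A$ is trivial if $sa=a$ for all $s\in S$, $a\in A$. For a nonempty finite set $X$, $F_X=\coprod_{x\in X}S_x$ is the free $S$-act on $X$. For an $S$-act $G$ and a relation $T\subseteq F_X\times F_X$, $T'_G=\{\mu:F_X\to G \text{ homomorphism}: T\subseteq\ker\mu\}$ and $T''_G=\bigcap_{\mu\in T'_G}\ker\mu$ (empty intersection $=F_X\times F_X$). $S$-acts $G_1,G_2$ are geometrically equivalent iff $T''_{G_1}=T''_{G_2}$ for all nonempty finite $X$ and all $T\subseteq F_X\times F_X$. *)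

(* Defs.v *)
From HB Require Import structures.
From mathcomp Require Import ssreflect ssrfun ssrbool eqtype choice fintype.
From mathcomp Require Import monoid.

Set Implicit Arguments.
Unset Strict Implicit.
Unset Printing Implicit Defensive.

Local Open Scope group_scope.

Record lact (S : monoidType) := LAct {
  acar :> Type;
  aop : S -> acar -> acar;
  aop1 : forall a, aop 1 a = a;
  aopM : forall s t a, aop (s * t) a = aop s (aop t a);
  acar_nonempty : inhabited acar
}.

Arguments aop {S} _ _ _.

Definition is_hom (S : monoidType) (A B : lact S) (f : A -> B) : Prop :=
  forall (s : S) (a : A), f (aop A s a) = aop B s (f a).

(* The free S-act F_X = coprod_{x in X} S_x : elements are pairs (s, x),
   with action t (s, x) = (t s, x). *)
Definition free_aop (S : monoidType) (X : Type) (t : S) (p : S * X) : S * X :=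
  (t * p.1, p.2).

Lemma free_aop1 (S : monoidType) (X : Type) (p : S * X) : free_aop 1 p = p.
Proof. by case: p => s x; rewrite /free_aop /= mul1g. Qed.

Lemma free_aopM (S : monoidType) (X : Type) (s t : S) (p : S * X) :
  free_aop (s * t) p = free_aop s (free_aop t p).
Proof. by case: p => u x; rewrite /free_aop /= mulgA. Qed.

Definition free_act (S : monoidType) (X : finType) (x0 : X) : lact S :=
  @LAct S (S * X)%type (@free_aop S X) (@free_aop1 S X) (@free_aopM S X)
    (inhabits (1, x0)).

Definition kerm (A B : Type) (f : A -> B) (a b : A) : Prop := f a = f b.

(* T''_G = intersection of ker mu over homomorphisms mu : F_X -> G with
   T contained in ker mu (empty intersection = F_X x F_X). *)
Definition rad_closure (S : monoidType) (X : finType) (x0 : X) (G : lact S)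
    (T : free_act S x0 -> free_act S x0 -> Prop) (a b : free_act S x0) : Prop :=
  forall mu : free_act S x0 -> G, is_hom mu ->
    (forall u v, T u v -> kerm mu u v) -> kerm mu a b.

Definition geom_equiv (S : monoidType) (G1 G2 : lact S) : Prop :=
  forall (X : finType) (x0 : X) (T : free_act S x0 -> free_act S x0 -> Prop)
         (a b : free_act S x0),
    rad_closure G1 T a b <-> rad_closure G2 T a b.

Definition trivial_act (S : monoidType) (A : lact S) : Prop :=
  forall (s : S) (a : A), aop A s a = a.

Definition card_gt1 (T : Type) : Prop := exists a b : T, a <> b.

(* Main.v *)
Require Import Defs.
From mathcomp Require Import ssreflect ssrfun ssrbool eqtype choice fintype.
From mathcomp Require Import monoid.
From Stdlib Require Import Classical ClassicalEpsilon.

Lemma transfer (S : monoidType) (G1 G2 : lact S) :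
  trivial_act G1 -> trivial_act G2 -> card_gt1 G1 ->
  forall (X : finType) (x0 : X) T a b,
    @rad_closure S X x0 G1 T a b -> @rad_closure S X x0 G2 T a b.
Proof.
move=> t1 t2 [c [d cd]] X x0 T a b H mu2 hmu2 HT.
apply: NNPP => Hne.
pose mu1 := fun p : free_act S x0 =>
  if excluded_middle_informative (mu2 p = mu2 b) then c else d.
have hom1 : is_hom mu1.
  move=> s p; rewrite /mu1 t1 hmu2 t2; done.
have HT1 : forall u v, T u v -> kerm mu1 u v.
  move=> u v Tuv; rewrite /kerm /mu1 (HT u v Tuv); done.
have := H mu1 hom1 HT1; rewrite /kerm /mu1.
case: excluded_middle_informative => // Ha.
case: excluded_middle_informative => // Hb; move=> /esym; done.
Qed.

Theorem corollary3p8 (S : monoidType) (G1 G2 : lact S) :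
  trivial_act G1 -> trivial_act G2 ->
  card_gt1 G1 -> card_gt1 G2 ->
  geom_equiv G1 G2.
Proof.
move=> t1 t2 c1 c2 X x0 T a b; split; exact: transfer.
Qed.
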